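(* Consider a POMDP with finite state, action and observation sets $\mathcal{S},\mathcal{A},O$, known cost $C:\mathcal{S}\times\mathcal{A}\to[0,1]$, known observation kernel $\eta$, and unknown transition kernel $\theta_*\in\Theta\subseteq\Theta_H$ drawn from a prior $f$, and let $(\theta_k,t_k,T_k,K_T)$ be generated by the PSRL-POMDP algorithm run for $T$ steps. Then $$R_T\le H\,\mathbb{E}_{\theta_*}[K_T]+R_1+R_2+R_3,$$ where $$R_1:=\mathbb{E}_{\theta_*}\Big[\sum_{k=1}^{K_T}T_k\big(J(\theta_k)-J(\theta_* )\big)\Big],$$ $$R_2:=H\,\mathbb{E}_{\theta_*}\Big[\sum_{k=1}^{K_T}\sum_{t=t_k}^{t_{k+1}-1}\Big(\sum_{s'}\big|\theta_*(s'\mid s_t,a_t)-\theta_k(s'\mid s_t,a_t)\big|+\sum_s\big|h_t(s;\theta_* )-h_t(s;\theta_k)\big|\Big)\Big],$$ $$R_3:=\mathbb{E}_{\theta_*}\Big[\sum_{k=1}^{K_T}\sum_{t=t_k}^{t_{k+1}-1}\big(c(h_t(\cdot;\theta_* ),a_t)-c(h_t(\cdot;\theta_k),a_t)\big)\Big].$$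
   Context: Notation: $\Delta_{\mathcal{X}}$ is the set of distributions on $\mathcal{X}$; $c(b,a):=\sum_sC(s,a)b(s)$; $P(o\mid b,a;\theta):=\sum_{s',s}\eta(o\mid s')\theta(s'\mid s,a)b(s)$; $\tau(b,a,o;\theta)(s'):=\frac{\sum_s\eta(o\mid s')\theta(s'\mid s,a)b(s)}{\sum_{s'',s}\eta(o\mid s'')\theta(s''\mid s,a)b(s)}$. $\Theta_H$ is the set of transition kernels $\theta$ for which there exist $J(\theta)\in\mathbb{R}$ and a bounded $v(\cdot;\theta):\Delta_{\mathcal{S}}\to\mathbb{R}$ with $\inf_b v(b;\theta)=0$, $\sup_b v(b;\theta)\le H$, satisfying for all $b$: $J(\theta)+v(b;\theta)=\min_a\{c(b,a)+\sum_oP(o\mid b,a;\theta)v(\tau(b,a,o;\theta);\theta)\}$; $\pi^*(b;\theta)$ denotes a minimizer of the right-hand side. Dynamics: $s_1\sim h(\cdot;\theta_* )$, $o_t\sim\eta(\cdot\mid s_t)$, $s_{t+1}\sim\theta_*(\cdot\mid s_t,a_t)$, cost $C(s_t,a_t)$ (unobserved). $\mathcal{F}_t$ is the sigma-algebra generated by $a_1,o_1,\dots,a_{t-1},o_t$. For each $\theta\in\Theta$, $h_t(s;\theta)=\Pr(s_t=s\mid\mathcal{F}_t;\theta)$, computed by $h_1(s;\theta)\propto\eta(o_1\mid s)h(s;\theta)$ and $h_{t+1}(\cdot;\theta)=\tau(h_t(\cdot;\theta),a_t,o_{t+1};\theta)$; $f_t$ is the posterior of $\theta_*$ given $\mathcal{F}_t$.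 PSRL-POMDP proceeds in episodes $k=1,2,\dots$ starting at times $t_1=1<t_2<\cdots$ (stopping times determined by the observed history); at $t_k$ it samples $\theta_k\sim f_{t_k}$ and for $t_k\le t<t_{k+1}$ plays $a_t=\pi^*(h_t(\cdot;\theta_k);\theta_k)$. $K_T$ is the number of episodes started by time $T$, $t_k:=T+1$ for $k>K_T$, and $T_k:=t_{k+1}-t_k$. $\mathbb{E}_{\theta_*}[\cdot]:=\mathbb{E}[\cdot\mid\theta_*]$, and the regret is $R_T:=\mathbb{E}_{\theta_*}\big[\sum_{t=1}^T(C(s_t,a_t)-J(\theta_* ))\big]$. *)

(* Defs.v *)
From HB Require Import structures.
From mathcomp Require Import all_boot all_order all_algebra.
From mathcomp Require Import all_classical all_reals all_analysis.
Set Implicit Arguments. Unset Strict Implicit. Unset Printing Implicit Defensive.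
Import Order.TTheory GRing.Theory Num.Theory.
Local Open Scope ring_scope.

Section POMDP.
Variables (R : realType) (S A Ob : finType).

Definition simplex (X : finType) (b : X -> R) : Prop :=
  (forall x, 0 <= b x) /\ \sum_(x : X) b x = 1.

Definition cb (C : S -> A -> R) (b : S -> R) (a : A) : R :=
  \sum_(s : S) C s a * b s.

Definition Pobs (eta : S -> Ob -> R) (th : S -> A -> S -> R)
  (b : S -> R) (a : A) (o : Ob) : R :=
  \sum_(s' : S) \sum_(s : S) eta s' o * th s a s' * b s.

(** tau(b,a,o;theta); when the normaliser P(o|b,a;theta) vanishes (the paper's
    ratio is undefined) we keep the current belief b. *)
Definition tau (eta : S -> Ob -> R) (th : S -> A -> S -> R)
  (b : S -> R) (a : A) (o : Ob) : S -> R :=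
  fun s' => if Pobs eta th b a o == 0 then b s'
            else (\sum_(s : S) eta s' o * th s a s' * b s) / Pobs eta th b a o.

Definition init_lik (eta : S -> Ob -> R) (h : S -> R) (o : Ob) : R :=
  \sum_(s : S) eta s o * h s.

Definition belief1 (eta : S -> Ob -> R) (h : S -> R) (o : Ob) : S -> R :=
  fun s => if init_lik eta h o == 0 then h s else eta s o * h s / init_lik eta h o.

(** Filtering along the observed steps [(a_1,o_2); ...; (a_{t-1},o_t)]:
    returns (belief, likelihood of the observations). *)
Fixpoint filt_aux (eta : S -> Ob -> R) (th : S -> A -> S -> R)
  (b : S -> R) (l : R) (st : seq (A * Ob)) : (S -> R) * R :=
  match st with
  | [::] => (b, l)
  | (a, o) :: st' => filt_aux eta th (tau eta th b a o) (l * Pobs eta th b a o) st'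
  end.

Definition belief eta th (h : S -> R) (o1 : Ob) (st : seq (A * Ob)) : S -> R :=
  (filt_aux eta th (belief1 eta h o1) (init_lik eta h o1) st).1.

Definition lik eta th (h : S -> R) (o1 : Ob) (st : seq (A * Ob)) : R :=
  (filt_aux eta th (belief1 eta h o1) (init_lik eta h o1) st).2.

Definition Qval (C : S -> A -> R) eta th (v : (S -> R) -> R) (b : S -> R) (a : A) : R :=
  cb C b a + \sum_(o : Ob) Pobs eta th b a o * v (tau eta th b a o).

(** theta \in Theta_H with solution (J, v) and minimiser pi:
    0 = inf_b v, sup_b v <= H, and for all b in Delta_S,
    J + v(b) = min_a Q(b,a) = Q(b, pi(b)). *)
Definition bellman_sol (H : R) (C : S -> A -> R) eta th (J : R)
  (v : (S -> R) -> R) (pi : (S -> R) -> A) : Prop :=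
  [/\ forall b, simplex b -> 0 <= v b <= H,
      forall e : R, 0 < e -> exists b, simplex b /\ v b < e
    & forall b, simplex b ->
        J + v b = Qval C eta th v b (pi b) /\
        forall a, Qval C eta th v b (pi b) <= Qval C eta th v b a].

End POMDP.

Section Process.
Variables (R : realType) (S A Ob : finType).
Variables (d : measure_display) (Th : measurableType d) (prior : probability Th R).
Variables (eta : S -> Ob -> R) (ker : Th -> S -> A -> S -> R) (h0 : Th -> S -> R).
Variables (pistar : Th -> (S -> R) -> A) (ep : Ob -> seq (A * Ob) -> bool).
Variable (pstar : Th).

(** Expectation of F under the posterior f_t, whose density wrt the prior is
    proportional to the likelihood L (falls back to the prior if the
    normaliser vanishes). *)
Definition post_expect (L : Th -> R) (F : Th -> R) : R :=
  let Z := fine (\int[prior]_p (L p)%:E)%E in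
  if Z == 0 then fine (\int[prior]_p (F p)%:E)%E
  else fine (\int[prior]_p (L p * F p)%:E)%E / Z.

(** Per-step quantity g t newep o1 st s_t theta_k a_t. *)
Definition stepfun := nat -> bool -> Ob -> seq (A * Ob) -> S -> Th -> A -> R.

(** Val g n o1 st s pc: conditional expectation (given theta_star = pstar) of the
    sum of g over the next n steps, when the observed history is
    (o1, st) (time t = size st + 1), the hidden state is s_t = s, and the
    current episode's sample is pc.  At t = 1 and whenever the stopping rule
    ep fires, a new episode starts and theta_k is sampled from the posterior. *)
Fixpoint Val (g : stepfun) (n : nat) (o1 : Ob) (st : seq (A * Ob)) (s : S) (pc : Th)
  {struct n} : R :=
  match n with
  | 0 => 0
  | n'.+1 =>
    let newep := if st is [::] then true else ep o1 st in
    let step := fun p : Th =>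
      let a := pistar p (belief eta (ker p) (h0 p) o1 st) in
      g (size st).+1 newep o1 st s p a +
      \sum_(s' : S) ker pstar s a s' *
         \sum_(o : Ob) eta s' o * Val g n' o1 (rcons st (a, o)) s' p in
    if newep then post_expect (fun p => lik eta (ker p) (h0 p) o1 st) step
    else step pc
  end.

(** E_{theta_star}[ sum_{t=1}^T g_t ] with s_1 ~ h(.;theta_star), o_1 ~ eta(.|s_1). *)
Definition Exp (T : nat) (g : stepfun) : R :=
  \sum_(s : S) h0 pstar s * \sum_(o : Ob) eta s o * Val g T o [::] s pstar.

End Process.

Section Summands.
Variables (R : realType) (S A Ob : finType).
Variables (d : measure_display) (Th : measurableType d).
Variables (C : S -> A -> R) (eta : S -> Ob -> R) (ker : Th -> S -> A -> S -> R)
  (h0 : Th -> S -> R) (J : Th -> R) (H : R) (pstar : Th).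

Definition g_regret : stepfun R S A Ob Th :=
  fun _ _ _ _ s _ a => C s a - J pstar.
Definition g_episode : stepfun R S A Ob Th :=
  fun _ newep _ _ _ _ _ => if newep then 1 else 0.
Definition g_R1 : stepfun R S A Ob Th :=
  fun _ _ _ _ _ p _ => J p - J pstar.
Definition g_R2 : stepfun R S A Ob Th :=
  fun _ _ o1 st s p a =>
    H * (\sum_(s' : S) `|ker pstar s a s' - ker p s a s'|
         + \sum_(x : S) `|belief eta (ker pstar) (h0 pstar) o1 st x
                          - belief eta (ker p) (h0 p) o1 st x|).
Definition g_R3 : stepfun R S A Ob Th :=
  fun _ _ o1 st _ p a =>
    cb C (belief eta (ker pstar) (h0 pstar) o1 st) a
    - cb C (belief eta (ker p) (h0 p) o1 st) a.
End Summands.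
Arguments g_episode {R S A Ob d Th}.

(* Main.v *)
Set Warnings "-notation-overridden,-ambiguous-paths,-notation-incompatible-prefix".
Require Import Defs.
From HB Require Import structures.
From mathcomp Require Import all_boot all_order all_algebra.
From mathcomp Require Import all_classical all_reals all_analysis.
From mathcomp Require Import ring lra.
From mathcomp Require Import measurable_realfun lebesgue_integral.
Import Order.TTheory GRing.Theory Num.Theory.
Local Open Scope classical_set_scope.
Local Open Scope ring_scope.
Set Implicit Arguments. Unset Strict Implicit. Unset Printing Implicit Defensive.

Section Alg.
Variables (R : realType) (S A Ob : finType).
Variable (eta : S -> Ob -> R).
Hypothesis heta : forall s, simplex (eta s).

Lemma le_sum_ge0 (I : finType) (F : I -> R) j :
  (forall i, 0 <= F i) -> F j <= \sum_i F i.
Proof.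
move=> h; rewrite (bigD1 j) //= lerDl; exact: sumr_ge0.
Qed.

Lemma simplex_le1 (X : finType) (b : X -> R) x : simplex b -> 0 <= b x <= 1.
Proof. by case=> h0 h1; rewrite h0 /= -h1 le_sum_ge0. Qed.

Variable (th : S -> A -> S -> R).
Hypothesis hth : forall s a, simplex (th s a).

Lemma eta_ge0 s o : 0 <= eta s o. Proof. by case: (heta s). Qed.
Lemma th_ge0 s a s' : 0 <= th s a s'. Proof. by case: (hth s a). Qed.

Lemma Pobs_ge0 b a o : (forall s, 0 <= b s) -> 0 <= Pobs eta th b a o.
Proof.
move=> hb; apply: sumr_ge0 => s' _; apply: sumr_ge0 => s _.
by rewrite !mulr_ge0 ?eta_ge0 ?th_ge0.
Qed.

Lemma sum_Pobs b a : \sum_o Pobs eta th b a o = \sum_s b s.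
Proof.
rewrite /Pobs exchange_big /=.
under eq_bigr => s' _ do rewrite exchange_big /=.
rewrite exchange_big /=; apply: eq_bigr => s _.
under eq_bigr => s' _ do rewrite -mulr_suml -mulr_suml (proj2 (heta s')) mul1r.
by rewrite -mulr_suml (proj2 (hth s a)) mul1r.
Qed.

Lemma Pobs_eq0 b a o s' : (forall s, 0 <= b s) -> Pobs eta th b a o = 0 ->
  \sum_s eta s' o * th s a s' * b s = 0.
Proof.
move=> hb /eqP; rewrite psumr_eq0 => [/allP H|s'' _]; last first.
  by apply: sumr_ge0 => s _; rewrite !mulr_ge0 ?eta_ge0 ?th_ge0.
by apply/eqP; apply: H; rewrite mem_index_enum.
Qed.

Lemma tau_simplex b a o : simplex b -> simplex (tau eta th b a o).
Proof.
move=> [hb0 hb1]; rewrite /tau; case: eqP => [_|P0]; first by [].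
have Pp : 0 < Pobs eta th b a o by rewrite lt_neqAle eq_sym; apply/andP; split; [apply/eqP|exact: Pobs_ge0].
split.
  move=> s'; apply: divr_ge0; last exact: ltW.
  by apply: sumr_ge0 => s _; rewrite !mulr_ge0 ?eta_ge0 ?th_ge0.
by rewrite -mulr_suml -/(Pobs eta th b a o) mulfV //; apply/eqP.
Qed.

Lemma Pobs_le1 b a o : simplex b -> 0 <= Pobs eta th b a o <= 1.
Proof.
move=> [hb0 hb1]; rewrite Pobs_ge0 //= -hb1 -(sum_Pobs b a).
by apply: le_sum_ge0 => o'; exact: Pobs_ge0.
Qed.

Lemma tau_u b a o s' : (forall s, 0 <= b s) ->
  Pobs eta th b a o * tau eta th b a o s' = \sum_s eta s' o * th s a s' * b s.
Proof.
move=> hb; rewrite /tau; case: eqP => [P0|P0].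
  by rewrite P0 mul0r (Pobs_eq0 s' hb P0).
by rewrite mulrC -mulrA mulVf ?mulr1 //; apply/eqP.
Qed.

Lemma init_lik_le1 h o : simplex h -> 0 <= init_lik eta h o <= 1.
Proof.
move=> [h0 h1]; rewrite /init_lik; apply/andP; split.
  by apply: sumr_ge0 => s _; rewrite mulr_ge0 ?eta_ge0.
rewrite -h1; apply: ler_sum => s _; rewrite ler_piMl //.
by case/andP: (simplex_le1 o (heta s)).
Qed.

Lemma belief1_simplex h o : simplex h -> simplex (belief1 eta h o).
Proof.
move=> [h0 h1]; rewrite /belief1; case: eqP => [_|P0]; first by [].
have Pp : 0 < init_lik eta h o.
  rewrite lt_neqAle eq_sym; apply/andP; split; first by apply/eqP.
  by apply: sumr_ge0 => s _; rewrite mulr_ge0 ?eta_ge0.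
split.
  by move=> s; apply: divr_ge0; [rewrite mulr_ge0 ?eta_ge0|exact: ltW].
by rewrite -mulr_suml -/(init_lik eta h o) mulfV //; apply/eqP.
Qed.

Lemma init_u h o s : (forall s, 0 <= h s) ->
  init_lik eta h o * belief1 eta h o s = eta s o * h s.
Proof.
move=> hh; rewrite /belief1; case: eqP => [P0|P0].
  rewrite P0 mul0r; move: P0 => /eqP; rewrite /init_lik psumr_eq0 => [/allP H|s' _].
    by have /eqP -> := H s (mem_index_enum _).
  by rewrite mulr_ge0 ?eta_ge0.
by rewrite [LHS]mulrC divfK //; apply/eqP.
Qed.

Lemma filt_inv st b l : simplex b -> 0 <= l <= 1 ->
  simplex (filt_aux eta th b l st).1 /\ 0 <= (filt_aux eta th b l st).2 <= 1.
Proof.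
elim: st b l => [|[a o] st IH] b l hb hl //=.
apply: IH; first exact: tau_simplex.
have /andP[p0 p1] := Pobs_le1 a o hb; case/andP: hl => l0 l1.
by rewrite mulr_ge0 //= mulr_ile1.
Qed.

Lemma filt_rcons st b l a o :
  filt_aux eta th b l (rcons st (a, o)) =
  (tau eta th (filt_aux eta th b l st).1 a o,
   (filt_aux eta th b l st).2 * Pobs eta th (filt_aux eta th b l st).1 a o).
Proof. by elim: st b l => [|[a' o'] st IH] b l //=. Qed.

Lemma belief_simplex h o1 st : simplex h -> simplex (belief eta th h o1 st).
Proof.
move=> hh; apply: (proj1 (filt_inv _ _ _)); first exact: belief1_simplex.
exact: init_lik_le1.
Qed.

Lemma lik_le1 h o1 st : simplex h -> 0 <= lik eta th h o1 st <= 1.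
Proof.
move=> hh; apply: (proj2 (filt_inv _ _ _)); first exact: belief1_simplex.
exact: init_lik_le1.
Qed.

Lemma belief_rcons h o1 st a o :
  belief eta th h o1 (rcons st (a, o)) = tau eta th (belief eta th h o1 st) a o.
Proof. by rewrite /belief filt_rcons. Qed.

Lemma lik_rcons h o1 st a o :
  lik eta th h o1 (rcons st (a, o)) =
  lik eta th h o1 st * Pobs eta th (belief eta th h o1 st) a o.
Proof. by rewrite /lik filt_rcons. Qed.

Lemma u_rcons h o1 st a o s' : simplex h ->
  lik eta th h o1 (rcons st (a, o)) * belief eta th h o1 (rcons st (a, o)) s' =
  \sum_s eta s' o * th s a s' * (lik eta th h o1 st * belief eta th h o1 st s).
Proof.
move=> hh; rewrite lik_rcons belief_rcons -mulrA tau_u; last first.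
  by case: (belief_simplex o1 st hh).
rewrite mulr_sumr; apply: eq_bigr => s _; ring.
Qed.

Lemma u_init h o s : simplex h ->
  lik eta th h o [::] * belief eta th h o [::] s = eta s o * h s.
Proof. by move=> [hh _]; rewrite /lik /belief /= init_u. Qed.

End Alg.

Set Implicit Arguments. Unset Strict Implicit. Unset Printing Implicit Defensive.

Lemma inv_meas (R : realType) : measurable_fun [set: R] (@GRing.inv R).
Proof.
have -> : [set: R] = [set x | x != 0] `|` [set 0].
  apply/seteqP; split => x //= _; case: (eqVneq x 0) => [->|]; [right|left] => //.
apply/measurable_funU.
- by apply: measurable_realfun.open_measurable; exact: open_neq.
- by apply: measurable_realfun.closed_measurable; exact: closed_eq.
split; last exact: measurable_fun_set1.
apply: measurable_realfun.open_continuous_measurable_fun; first exact: open_neq.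
by move=> x; rewrite inE => /inv_continuous.
Qed.

Section Meas.
Variables (R : realType) (d : measure_display) (Th : measurableType d).
Definition mf (f : Th -> R) := measurable_fun [set: Th] f.
Definition gd (f : Th -> R) := mf f /\ exists M, forall p, `|f p| <= M.

Lemma mf_cst k : mf (fun=> k). Proof. exact: measurable_cst. Qed.
Lemma mfD f g : mf f -> mf g -> mf (fun p => f p + g p).
Proof. exact: measurable_funD. Qed.
Lemma mfM f g : mf f -> mf g -> mf (fun p => f p * g p).
Proof. exact: measurable_funM. Qed.
Lemma mfB f g : mf f -> mf g -> mf (fun p => f p - g p).
Proof. exact: measurable_funB. Qed.
Lemma mf_norm f : mf f -> mf (fun p => `|f p|).
Proof. by move=> h; apply: (measurableT_comp _ h); exact: normr_measurable. Qed.
Lemma mf_inv f : mf f -> mf (fun p => (f p)^-1).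
Proof. by move=> h; apply: (measurableT_comp (@inv_meas R) h). Qed.
Lemma mf_sum (I : Type) (r : seq I) (P : pred I) (f : I -> Th -> R) :
  (forall i, mf (f i)) -> mf (fun p => \sum_(i <- r | P i) f i p).
Proof.
move=> h; elim: r => [|i r IH].
  by rewrite /mf; under eq_fun do rewrite big_nil; exact: mf_cst.
rewrite /mf; under eq_fun do rewrite big_cons.
by case: (P i) => //; exact: mfD.
Qed.
Lemma mf_if0 f g k : mf f -> mf g -> mf k ->
  mf (fun p => if f p == 0 then g p else k p).
Proof.
move=> hf hg hk; apply: measurable_fun_ifT => //.
exact: measurable_realfun.measurable_fun_eqr hf (mf_cst 0).
Qed.

Lemma mf_pick (A : finType) (a_ : Th -> A) (F : Th -> A -> R) :
  (forall a, measurable [set p | a_ p = a]) -> (forall a, mf (F ^~ a)) ->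
  mf (fun p => F p (a_ p)).
Proof.
move=> ha hF.
have -> : (fun p => F p (a_ p)) = (fun p => \sum_(a : A) if a_ p == a then F p a else 0).
  apply: funext => p; rewrite (bigD1 (a_ p)) //= eqxx big1 ?addr0 //.
  by move=> a /negPf; rewrite eq_sym => ->.
apply: mf_sum => a; apply: measurable_fun_ifT => //.
apply: (measurable_fun_bool true).
rewrite setTI; have -> : (fun p => a_ p == a) @^-1` [set true] = [set p | a_ p = a].
  by apply/seteqP; split => p /=; move/eqP.
exact: ha.
exact: hF.
Qed.

Lemma gd_cst k : gd (fun=> k).
Proof. by split; [exact: mf_cst|exists `|k|]. Qed.
Lemma gdD f g : gd f -> gd g -> gd (fun p => f p + g p).
Proof.
move=> [mf1 [M1 h1]] [mg [M2 h2]]; split; first exact: mfD.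
by exists (M1 + M2) => p; rewrite (le_trans (ler_normD _ _)) // lerD.
Qed.
Lemma gdM f g : gd f -> gd g -> gd (fun p => f p * g p).
Proof.
move=> [mf1 [M1 h1]] [mg [M2 h2]]; split; first exact: mfM.
exists (M1 * M2) => p; rewrite normrM ler_pM //.
Qed.
Lemma gdN f : gd f -> gd (fun p => - f p).
Proof.
move=> [mf1 [M1 h1]]; split; first exact: (measurable_realfun.measurable_funN mf1).
by exists M1 => p; rewrite normrN.
Qed.
Lemma gdB f g : gd f -> gd g -> gd (fun p => f p - g p).
Proof. by move=> hf hg; apply: gdD => //; exact: gdN. Qed.
Lemma gd_norm f : gd f -> gd (fun p => `|f p|).
Proof.
move=> [mf1 [M1 h1]]; split; first exact: mf_norm.
by exists M1 => p; rewrite normr_id.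
Qed.
Lemma gd_sum (I : Type) (r : seq I) (P : pred I) (f : I -> Th -> R) :
  (forall i, gd (f i)) -> gd (fun p => \sum_(i <- r | P i) f i p).
Proof.
move=> h; elim: r => [|i r IH].
  have -> : (fun p => \sum_(i <- [::] | P i) f i p) = fun=> 0.
    by apply: funext => p; rewrite big_nil.
  exact: gd_cst.
have -> : (fun p => \sum_(j <- i :: r | P j) f j p) =
   fun p => (if P i then f i p else 0) + \sum_(j <- r | P j) f j p.
  by apply: funext => p; rewrite big_cons; case: (P i); rewrite ?add0r.
apply: gdD => //; case: (P i) => //; exact: gd_cst.
Qed.
Lemma gd_pick (A : finType) (a_ : Th -> A) (F : Th -> A -> R) :
  (forall a, measurable [set p | a_ p = a]) -> (forall a, gd (F ^~ a)) ->
  gd (fun p => F p (a_ p)).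
Proof.
move=> ha hF; split; first by apply: mf_pick => // a; case: (hF a).
have [M hM] := choice (fun a => proj2 (hF a)).
exists (\sum_a `|M a|) => p; apply: le_trans (hM (a_ p) p) _.
rewrite (le_trans (ler_norm _)) //.
by apply: le_sum_ge0 => a.
Qed.

Variable (prior : probability Th R).

Lemma gd_int f : gd f -> prior.-integrable setT (EFin \o f).
Proof.
move=> [mf1 [M hM]]; apply: (@le_integrable _ _ _ prior _ measurableT _ (fun=> M%:E)).
- exact/measurable_EFinP.
- by move=> p _ /=; rewrite lee_fin (le_trans (hM p)) // ler_norm.
- have := @finite_measure_integrable_cst _ _ _ prior setT M measurableT.
  by [].
Qed.

Lemma fine_intD f g k : gd f -> gd g ->
  fine (\int[prior]_p (f p + k * g p)%:E)%E =
  fine (\int[prior]_p (f p)%:E)%E + k * fine (\int[prior]_p (g p)%:E)%E.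
Proof.
move=> hf hg.
have ig : prior.-integrable setT (EFin \o (fun p => k * g p)).
  by apply: gd_int; apply: gdM => //; exact: gd_cst.
rewrite (_ : (fun p => (f p + k * g p)%:E) = ((EFin \o f) \+ (EFin \o (fun p => (k * g p)%R)))%E); last first.
  by apply: funext => p.
rewrite integralD_EFin //; last exact: gd_int.
rewrite (_ : (fun x => (EFin \o (fun p => k * g p)) x) = fun x => (k%:E * (g x)%:E)%E); last first.
  by apply: funext.
rewrite integralZl //; last exact: gd_int.
rewrite fineD ?fineM //; try exact: integrable_fin_num (gd_int _).
by rewrite fin_numM // integrable_fin_num //; exact: gd_int.
Qed.

Lemma pe_lin L f g k : gd L -> gd f -> gd g ->
  post_expect prior L (fun p => f p + k * g p) =
  post_expect prior L f + k * post_expect prior L g.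
Proof.
move=> hL hf hg; rewrite /post_expect; case: ifP => _.
  exact: fine_intD.
have e : forall p, L p * (f p + k * g p) = L p * f p + k * (L p * g p).
  by move=> p; ring.
under eq_integral => p _ do rewrite e.
rewrite fine_intD; try exact: gdM.
by rewrite mulrDl mulrA.
Qed.

Lemma pe0 L : gd L -> post_expect prior L (fun=> 0) = 0.
Proof.
move=> hL; have := pe_lin 1 hL (gd_cst 0) (gd_cst 0).
rewrite (_ : (fun _ => 0 + 1 * 0) = fun=> 0); last by apply: funext => p; rewrite mulr0 addr0.
rewrite mul1r => e.
have : post_expect prior L (fun=> 0) - post_expect prior L (fun=> 0) = post_expect prior L (fun=> 0).
  by rewrite [X in X - _]e addrK.
by rewrite subrr => <-.
Qed.

Lemma pe_sum L (I : Type) (r : seq I) (w : I -> R) (f : I -> Th -> R) :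
  gd L -> (forall i, gd (f i)) ->
  post_expect prior L (fun p => \sum_(i <- r) w i * f i p) =
  \sum_(i <- r) w i * post_expect prior L (f i).
Proof.
move=> hL hf; elim: r => [|i r IH].
  rewrite big_nil (_ : (fun p => \sum_(i <- [::]) w i * f i p) = (fun p => 0)).
    exact: pe0.
  by apply: funext => p; rewrite big_nil.
rewrite big_cons -IH.
rewrite (_ : (fun p => \sum_(j <- i :: r) w j * f j p) =
   fun p => \sum_(j <- r) w j * f j p + w i * f i p); last first.
  by apply: funext => p; rewrite big_cons addrC.
rewrite pe_lin //; first by rewrite addrC.
by apply: gd_sum => j; apply: gdM => //; exact: gd_cst.
Qed.

Lemma pe_ge0 L f : (forall p, 0 <= L p) -> (forall p, 0 <= f p) ->
  0 <= post_expect prior L f.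
Proof.
move=> hL hf; rewrite /post_expect; case: ifP => Z0.
  by apply: fine_ge0; apply: integral_ge0 => p _; rewrite lee_fin.
apply: divr_ge0; apply: fine_ge0; apply: integral_ge0 => p _; rewrite lee_fin //.
exact: mulr_ge0.
Qed.

End Meas.

Set Implicit Arguments. Unset Strict Implicit. Unset Printing Implicit Defensive.

Section MeasFilt.
Variables (R : realType) (S A Ob : finType) (d : measure_display) (Th : measurableType d).
Variables (eta : S -> Ob -> R) (th : Th -> S -> A -> S -> R) (h : Th -> S -> R).
Hypothesis mth : forall s a s', mf (fun p => th p s a s').
Hypothesis mh : forall s, mf (fun p => h p s).

Lemma mf_Pobs (b : Th -> S -> R) a o : (forall s, mf (fun p => b p s)) ->
  mf (fun p => Pobs eta (th p) (b p) a o).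
Proof.
move=> hb; apply: mf_sum => s'; apply: mf_sum => s.
by apply: mfM => //; apply: mfM => //; exact: mf_cst.
Qed.

Lemma mf_tau (b : Th -> S -> R) a o s' : (forall s, mf (fun p => b p s)) ->
  mf (fun p => tau eta (th p) (b p) a o s').
Proof.
move=> hb; rewrite /tau; apply: mf_if0 => //; first exact: mf_Pobs.
apply: mfM; last by apply: mf_inv; exact: mf_Pobs.
apply: mf_sum => s; apply: mfM => //; apply: mfM => //; exact: mf_cst.
Qed.

Lemma mf_filt st : forall (b : Th -> S -> R) (l : Th -> R),
  (forall s, mf (fun p => b p s)) -> mf l ->
  (forall s, mf (fun p => (filt_aux eta (th p) (b p) (l p) st).1 s)) /\
  mf (fun p => (filt_aux eta (th p) (b p) (l p) st).2).
Proof.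
elim: st => [|[a o] st IH] b l hb hl //=.
apply: (IH (fun p => tau eta (th p) (b p) a o) (fun p => l p * Pobs eta (th p) (b p) a o)).
  by move=> s; exact: mf_tau.
by apply: mfM => //; exact: mf_Pobs.
Qed.

Lemma mf_init o : mf (fun p => init_lik eta (h p) o).
Proof. by apply: mf_sum => s; apply: mfM => //; exact: mf_cst. Qed.

Lemma mf_belief1 o s : mf (fun p => belief1 eta (h p) o s).
Proof.
rewrite /belief1; apply: mf_if0 => //; first exact: mf_init.
apply: mfM; last by apply: mf_inv; exact: mf_init.
by apply: mfM => //; exact: mf_cst.
Qed.

Lemma mf_bl o1 st :
  (forall s, mf (fun p => belief eta (th p) (h p) o1 st s)) /\
  mf (fun p => lik eta (th p) (h p) o1 st).
Proof.
exact: (@mf_filt st (fun p => belief1 eta (h p) o1) (fun p => init_lik eta (h p) o1)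
   (fun s' => mf_belief1 o1 s') (mf_init o1)).
Qed.
Lemma mf_belief o1 st s : mf (fun p => belief eta (th p) (h p) o1 st s).
Proof. exact: (proj1 (mf_bl o1 st) s). Qed.
Lemma mf_lik o1 st : mf (fun p => lik eta (th p) (h p) o1 st).
Proof. exact: (proj2 (mf_bl o1 st)). Qed.

End MeasFilt.

Set Implicit Arguments. Unset Strict Implicit. Unset Printing Implicit Defensive.

Section TV.
Variables (R : realType) (S A Ob : finType).
Variable (eta : S -> Ob -> R).
Hypothesis heta : forall s, simplex (eta s).

Lemma dsum_lin (I J : finType) (a : I -> R) (b : I -> J -> R) (x y : I -> J -> R) k1 k2 :
  \sum_i a i * \sum_j b i j * (k1 * x i j + k2 * y i j) =
  k1 * \sum_i a i * \sum_j b i j * x i j + k2 * \sum_i a i * \sum_j b i j * y i j.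
Proof.
rewrite !mulr_sumr -big_split /=; apply: eq_bigr => i _.
rewrite !mulr_sumr -big_split /=; apply: eq_bigr => j _; ring.
Qed.

Lemma Pobs_w (th : S -> A -> S -> R) b a (w : Ob -> R) :
  \sum_o Pobs eta th b a o * w o =
  \sum_s b s * \sum_s' th s a s' * \sum_o eta s' o * w o.
Proof.
have -> : \sum_o Pobs eta th b a o * w o =
          \sum_o \sum_s' \sum_s eta s' o * th s a s' * b s * w o.
  apply: eq_bigr => o _; rewrite /Pobs mulr_suml; apply: eq_bigr => s' _.
  by rewrite mulr_suml.
rewrite exchange_big /=.
under eq_bigr => s' _ do rewrite exchange_big /=.
rewrite exchange_big /=; apply: eq_bigr => s _.
rewrite mulr_sumr; apply: eq_bigr => s' _.
rewrite !mulr_sumr; apply: eq_bigr => o _; ring.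
Qed.

Variable (H : R).
Lemma TV (th1 th2 : S -> A -> S -> R) (b1 b2 : S -> R) a (w : Ob -> R) :
  (forall o, 0 <= w o <= H) -> (forall s, 0 <= b1 s) ->
  (forall s, simplex (th2 s a)) ->
  \sum_o Pobs eta th1 b1 a o * w o - \sum_o Pobs eta th2 b2 a o * w o <=
  H * \sum_s b1 s * \sum_s' `|th1 s a s' - th2 s a s'| +
  H * \sum_s `|b1 s - b2 s|.
Proof.
move=> hw hb1 hth2; rewrite !Pobs_w.
set f := fun s' => \sum_o eta s' o * w o.
have hf : forall s', 0 <= f s' <= H.
  move=> s'; rewrite /f; apply/andP; split.
    apply: sumr_ge0 => o _; apply: mulr_ge0; first by case: (heta s').
    by case/andP: (hw o).
  apply: (@le_trans _ _ (\sum_o eta s' o * H)).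
    apply: ler_sum => o _; apply: ler_wpM2l; first by case: (heta s').
    by case/andP: (hw o).
  by rewrite -mulr_suml (proj2 (heta s')) mul1r.
rewrite -sumrB.
have -> : H * \sum_s b1 s * \sum_s' `|th1 s a s' - th2 s a s'| + H * \sum_s `|b1 s - b2 s| =
  \sum_s (H * (b1 s * \sum_s' `|th1 s a s' - th2 s a s'|) + H * `|b1 s - b2 s|).
  by rewrite big_split /= -!mulr_sumr.
apply: ler_sum => s _.
set g1 := \sum_s' th1 s a s' * f s'.
set g2 := \sum_s' th2 s a s' * f s'.
have -> : b1 s * g1 - b2 s * g2 = b1 s * (g1 - g2) + (b1 s - b2 s) * g2 by ring.
have hg2 : 0 <= g2 <= H.
  apply/andP; split.
    apply: sumr_ge0 => s' _; apply: mulr_ge0; first by case: (hth2 s).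
    by case/andP: (hf s').
  apply: (@le_trans _ _ (\sum_s' th2 s a s' * H)).
    apply: ler_sum => s' _; apply: ler_wpM2l; first by case: (hth2 s).
    by case/andP: (hf s').
  by rewrite -mulr_suml (proj2 (hth2 s)) mul1r.
have hg : g1 - g2 <= H * \sum_s' `|th1 s a s' - th2 s a s'|.
  rewrite /g1 /g2 -sumrB mulr_sumr; apply: ler_sum => s' _.
  rewrite -mulrBl mulrC; apply: (@le_trans _ _ (f s' * `|th1 s a s' - th2 s a s'|)).
    by apply: ler_wpM2l; [case/andP: (hf s')|exact: ler_norm].
  by apply: ler_wpM2r => //; case/andP: (hf s').
apply: lerD.
  rewrite mulrCA; apply: ler_wpM2l => //.
apply: (@le_trans _ _ (`|b1 s - b2 s| * g2)).
  by apply: ler_wpM2r; [case/andP: hg2|exact: ler_norm].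
by rewrite [X in _ <= X]mulrC; apply: ler_wpM2l => //; case/andP: hg2.
Qed.

End TV.

Set Implicit Arguments. Unset Strict Implicit. Unset Printing Implicit Defensive.

Lemma peZ (R : realType) (d : measure_display) (Th : measurableType d)
  (prior : probability Th R) L f k : gd L -> gd f ->
  post_expect prior L (fun p => k * f p) = k * post_expect prior L f.
Proof.
move=> hL hf; have := pe_lin prior k hL (gd_cst _ 0) hf.
rewrite pe0 // add0r => <-; congr post_expect; apply: funext => p.
by rewrite add0r.
Qed.

Section Main.
Variables (R : realType) (S A Ob : finType) (d : measure_display) (Th : measurableType d)
  (prior : probability Th R)
  (C : S -> A -> R) (eta : S -> Ob -> R) (ker : Th -> S -> A -> S -> R) (h0 : Th -> S -> R)
  (H : R) (J : Th -> R) (v : Th -> (S -> R) -> R) (pistar : Th -> (S -> R) -> A)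
  (ep : Ob -> seq (A * Ob) -> bool) (pstar : Th).
Hypotheses (hC : forall s a, 0 <= C s a <= 1) (heta : forall s, simplex (eta s))
  (hker : forall p s a, simplex (ker p s a)) (hh0 : forall p, simplex (h0 p))
  (hbell : forall p, bellman_sol H C eta (ker p) (J p) (v p) (pistar p))
  (mker : forall s a s', measurable_fun setT (fun p => ker p s a s'))
  (mh0 : forall s, measurable_fun setT (fun p => h0 p s))
  (mJ : measurable_fun setT J)
  (mpi : forall b : Th -> S -> R, (forall s, measurable_fun setT (fun p => b p s)) ->
     forall a, measurable [set p | pistar p (b p) = a]).

Notation bel p o1 st := (belief eta (ker p) (h0 p) o1 st).
Notation lk p o1 st := (lik eta (ker p) (h0 p) o1 st).
Definition ne (o1 : Ob) (st : seq (A * Ob)) := if st is [::] then true else ep o1 st.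
Definition act p o1 st := pistar p (bel p o1 st).
Notation VV := (Val prior eta ker h0 pistar ep pstar).
Definition stp (g : stepfun R S A Ob Th) n o1 st s p :=
  g (size st).+1 (ne o1 st) o1 st s p (act p o1 st) +
  \sum_(s' : S) ker pstar s (act p o1 st) s' *
     \sum_(o : Ob) eta s' o * VV g n o1 (rcons st (act p o1 st, o)) s' p.

Lemma ValS g n o1 st s pc : VV g n.+1 o1 st s pc =
  if ne o1 st then post_expect prior (fun p => lk p o1 st) (stp g n o1 st s)
  else stp g n o1 st s pc.
Proof. by []. Qed.

Lemma bel_simplex p o1 st : simplex (bel p o1 st).
Proof. exact: belief_simplex. Qed.
Lemma lk_bnd p o1 st : 0 <= lk p o1 st <= 1.
Proof. exact: lik_le1. Qed.
Lemma v_bnd p b : simplex b -> 0 <= v p b <= H.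
Proof. by case: (hbell p) => hv _ _; exact: hv. Qed.
Lemma H_ge0 : 0 <= H.
Proof. by case/andP: (v_bnd pstar (hh0 pstar)) => h1 h2; exact: le_trans h2. Qed.

Lemma cb_bnd b a : simplex b -> 0 <= cb C b a <= 1.
Proof.
move=> [b0 b1]; rewrite /cb; apply/andP; split.
  by apply: sumr_ge0 => s _; apply: mulr_ge0 => //; case/andP: (hC s a).
rewrite -b1; apply: ler_sum => s _; rewrite ler_piMl //.
by case/andP: (hC s a).
Qed.

Lemma EPv_bnd p b a : simplex b ->
  0 <= \sum_o Pobs eta (ker p) b a o * v p (tau eta (ker p) b a o) <= H.
Proof.
move=> hb; apply/andP; split.
  apply: sumr_ge0 => o _; apply: mulr_ge0; first by apply: Pobs_ge0 => //; case: hb.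
  by case/andP: (v_bnd p (tau_simplex heta (hker p) a o hb)).
apply: (@le_trans _ _ (\sum_o Pobs eta (ker p) b a o * H)).
  apply: ler_sum => o _; apply: ler_wpM2l; first by apply: Pobs_ge0 => //; case: hb.
  by case/andP: (v_bnd p (tau_simplex heta (hker p) a o hb)).
by rewrite -mulr_suml sum_Pobs //; case: hb => _ ->; rewrite mul1r.
Qed.

Lemma J_bnd p : `|J p| <= 1 + H + H.
Proof.
case: (hbell p) => _ _ hb; have [e _] := hb _ (hh0 p).
have : J p = Qval C eta (ker p) (v p) (h0 p) (pistar p (h0 p)) - v p (h0 p).
  by rewrite -e addrK.
rewrite /Qval => ->.
have /andP[c0 c1] := cb_bnd (pistar p (h0 p)) (hh0 p).
have /andP[e0 e1] := EPv_bnd p (pistar p (h0 p)) (hh0 p).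
have /andP[v0 v1] := v_bnd p (hh0 p).
rewrite ler_norml; apply/andP; split; lra.
Qed.

Lemma gd_ker s a s' : gd (fun p => ker p s a s').
Proof.
split; first exact: mker.
by exists 1 => p; have /andP[x0 x1] := simplex_le1 s' (hker p s a); rewrite ger0_norm.
Qed.
Lemma gd_bel o1 st x : gd (fun p => bel p o1 st x).
Proof.
split; first exact: mf_belief.
by exists 1 => p; have /andP[x0 x1] := simplex_le1 x (bel_simplex p o1 st); rewrite ger0_norm.
Qed.
Lemma gd_lk o1 st : gd (fun p => lk p o1 st).
Proof.
split; first exact: mf_lik.
by exists 1 => p; have /andP[x0 x1] := lk_bnd p o1 st; rewrite ger0_norm.
Qed.
Lemma gd_J : gd J.
Proof. by split => //; exists (1 + H + H); exact: J_bnd. Qed.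

Lemma meas_act o1 st a : measurable [set p | act p o1 st = a].
Proof.
apply: (mpi (b := fun p => bel p o1 st)) => s; exact: mf_belief.
Qed.

Definition good (g : stepfun R S A Ob Th) :=
  forall t b o1 st s a, gd (fun p => g t b o1 st s p a).

Lemma gd_stp g n o1 st s : good g -> (forall st s, gd (VV g n o1 st s)) ->
  gd (stp g n o1 st s).
Proof.
move=> hg hV.
apply: (@gd_pick _ _ _ _ (fun p => act p o1 st)
  (fun p a => g (size st).+1 (ne o1 st) o1 st s p a +
     \sum_(s' : S) ker pstar s a s' *
     \sum_(o : Ob) eta s' o * VV g n o1 (rcons st (a, o)) s' p)).
  exact: meas_act.
move=> a /=; apply: gdD => //; apply: gd_sum => s'; apply: gdM; first exact: gd_cst.
by apply: gd_sum => o; apply: gdM; [exact: gd_cst|exact: hV].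
Qed.

Lemma gd_Val g : good g -> forall n o1 st s, gd (VV g n o1 st s).
Proof.
move=> hg; elim=> [|n IH] o1 st s; first exact: gd_cst.
have -> : VV g n.+1 o1 st s = fun pc =>
  if ne o1 st then post_expect prior (fun p => lk p o1 st) (stp g n o1 st s)
  else stp g n o1 st s pc by apply: funext => pc; rewrite ValS.
case: (ne o1 st); first exact: gd_cst.
exact: gd_stp.
Qed.

Definition lin k1 (g1 : stepfun R S A Ob Th) k2 (g2 : stepfun R S A Ob Th) : stepfun R S A Ob Th :=
  fun t b o1 st s p a => k1 * g1 t b o1 st s p a + k2 * g2 t b o1 st s p a.

Lemma good_lin k1 g1 k2 g2 : good g1 -> good g2 -> good (lin k1 g1 k2 g2).
Proof.
move=> h1 h2 t b o1 st s a; rewrite /lin.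
by apply: gdD; apply: gdM => //; exact: gd_cst.
Qed.

Lemma Val_lin k1 g1 k2 g2 : good g1 -> good g2 -> forall n o1 st s pc,
  VV (lin k1 g1 k2 g2) n o1 st s pc = k1 * VV g1 n o1 st s pc + k2 * VV g2 n o1 st s pc.
Proof.
move=> h1 h2; elim=> [|n IH] o1 st s pc; first by rewrite /= !mulr0 addr0.
have es : forall p, stp (lin k1 g1 k2 g2) n o1 st s p =
    k1 * stp g1 n o1 st s p + k2 * stp g2 n o1 st s p.
  move=> p; rewrite /stp.
  under eq_bigr => s' _ do under eq_bigr => o _ do rewrite IH.
  rewrite (dsum_lin (fun s' => ker pstar s (act p o1 st) s') (fun s' o => eta s' o)
    (fun s' o => VV g1 n o1 (rcons st (act p o1 st, o)) s' p)
    (fun s' o => VV g2 n o1 (rcons st (act p o1 st, o)) s' p)).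
  rewrite /lin; ring.
rewrite !ValS; case: (ne o1 st); last exact: es.
rewrite (_ : stp (lin k1 g1 k2 g2) n o1 st s =
   fun p => (fun p => k1 * stp g1 n o1 st s p) p + k2 * stp g2 n o1 st s p); last first.
  by apply: funext => p; rewrite es.
have hs1 : gd (stp g1 n o1 st s) by apply: gd_stp => // st' s'; exact: gd_Val.
have hs2 : gd (stp g2 n o1 st s) by apply: gd_stp => // st' s'; exact: gd_Val.
rewrite pe_lin //; first by rewrite peZ //; exact: gd_lk.
- exact: gd_lk.
- by apply: gdM => //; exact: gd_cst.
Qed.

Notation EE := (Exp prior eta ker h0 pistar ep pstar).

Lemma Exp_lin T k1 g1 k2 g2 : good g1 -> good g2 ->
  EE T (lin k1 g1 k2 g2) = k1 * EE T g1 + k2 * EE T g2.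
Proof.
move=> h1 h2; rewrite /Exp.
under eq_bigr => s _ do under eq_bigr => o _ do rewrite Val_lin //.
exact: (dsum_lin (fun s => h0 pstar s) (fun s o => eta s o)
   (fun s o => VV g1 T o [::] s pstar) (fun s o => VV g2 T o [::] s pstar)).
Qed.


Lemma tri (I1 I2 I3 : finType) (F : I1 -> I2 -> I3 -> R) :
  \sum_i \sum_j \sum_k F i j k = \sum_k \sum_j \sum_i F i j k.
Proof.
rewrite exchange_big /=; under eq_bigr => j _ do rewrite exchange_big /=.
by rewrite exchange_big.
Qed.

Lemma good_regret : good (g_regret C J pstar).
Proof. by move=> *; exact: gd_cst. Qed.
Lemma good_episode : good g_episode.
Proof. by move=> *; exact: gd_cst. Qed.
Lemma good_R1 : good (g_R1 J pstar).
Proof. by move=> *; apply: gdB; [exact: gd_J|exact: gd_cst]. Qed.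
Lemma good_R2 : good (g_R2 eta ker h0 H pstar).
Proof.
move=> t b o1 st s a; rewrite /g_R2; apply: gdM; first exact: gd_cst.
apply: gdD; apply: gd_sum => x; apply: gd_norm; apply: gdB; try exact: gd_cst.
  exact: gd_ker.
exact: gd_bel.
Qed.
Lemma good_R3 : good (g_R3 C eta ker h0 pstar).
Proof.
move=> t b o1 st s a; rewrite /g_R3 /cb; apply: gdB; first exact: gd_cst.
by apply: gd_sum => x; apply: gdM; [exact: gd_cst|exact: gd_bel].
Qed.

Definition D := lin 1 (lin H g_episode 1 (g_R1 J pstar)) 1
  (lin 1 (g_R2 eta ker h0 H pstar) 1 (lin 1 (g_R3 C eta ker h0 pstar) (-1) (g_regret C J pstar))).

Lemma good_D : good D.
Proof.
apply: good_lin; apply: good_lin; try apply: good_lin;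
  solve [exact: good_regret|exact: good_episode|exact: good_R1|exact: good_R2|exact: good_R3].
Qed.

Definition uu o1 st s := lk pstar o1 st * bel pstar o1 st s.
Definition FF n o1 st pc := \sum_s uu o1 st s * VV D n o1 st s pc.

Lemma stepA n o1 st p a :
  \sum_s uu o1 st s * (\sum_s' ker pstar s a s' *
     \sum_o eta s' o * VV D n o1 (rcons st (a, o)) s' p) =
  \sum_o FF n o1 (rcons st (a, o)) p.
Proof.
rewrite /FF /uu.
under [RHS]eq_bigr => o _ do under eq_bigr => s' _ do rewrite u_rcons //.
have -> : \sum_s lk pstar o1 st * bel pstar o1 st s *
      (\sum_s' ker pstar s a s' * \sum_o eta s' o * VV D n o1 (rcons st (a, o)) s' p) =
    \sum_s \sum_s' \sum_o lk pstar o1 st * bel pstar o1 st s * ker pstar s a s' * eta s' o *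
       VV D n o1 (rcons st (a, o)) s' p.
  apply: eq_bigr => s _; rewrite mulr_sumr; apply: eq_bigr => s' _.
  rewrite !mulr_sumr; apply: eq_bigr => o _; ring.
rewrite tri; apply: eq_bigr => o _; apply: eq_bigr => s' _.
by rewrite mulr_suml; apply: eq_bigr => s _; ring.
Qed.

Lemma KI n o1 st p :
  (forall st' pc, (if ne o1 st' then 0 else - (lk pstar o1 st' * v pc (bel pc o1 st')))
     <= FF n o1 st' pc) ->
  lk pstar o1 st * (H * (if ne o1 st then 1 else 0) - v p (bel p o1 st)) <=
  \sum_s uu o1 st s * stp D n o1 st s p.
Proof.
move=> IH; rewrite /stp.
set a := act p o1 st.
under eq_bigr => s _ do rewrite mulrDr.
rewrite big_split /= stepA.
set bs := bel pstar o1 st; set bk := bel p o1 st; set ls := lk pstar o1 st.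
set w := fun o => v p (tau eta (ker p) bk a o).
have ls0 : 0 <= ls by case/andP: (lk_bnd pstar o1 st).
have hbs : simplex bs by exact: bel_simplex.
have hbk : simplex bk by exact: bel_simplex.
have hF : ls * (- \sum_o Pobs eta (ker pstar) bs a o * w o) <= \sum_o FF n o1 (rcons st (a, o)) p.
  rewrite mulrN -mulNr mulr_sumr; apply: ler_sum => o _.
  apply: le_trans (IH _ _).
  have hl' := lk_bnd pstar o1 (rcons st (a, o)).
  have hv' := v_bnd p (bel_simplex p o1 (rcons st (a, o))).
  rewrite lik_rcons // belief_rcons //.
  rewrite lik_rcons // belief_rcons // in hl' hv'.
  case/andP: hl' => l0 _; case/andP: hv' => v0 _.
  case: (ne o1 (rcons st (a, o))).
    by rewrite mulNr oppr_le0 mulrA mulr_ge0.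
  by rewrite mulNr mulrA.
set e := (if ne o1 st then 1 else 0) : R.
set Y := fun s => \sum_s' `|ker pstar s a s' - ker p s a s'|.
set Z := \sum_x `|bs x - bk x|.
set K0 := H * e + (J p - J pstar) + H * Z + (cb C bs a - cb C bk a) + J pstar.
have hD : forall s, D (size st).+1 (ne o1 st) o1 st s p a = K0 + H * Y s - C s a.
  by move=> s; rewrite /D /lin /g_episode /g_R1 /g_R2 /g_R3 /g_regret /K0 /Y /Z /e; ring.
have hC' : \sum_s uu o1 st s * D (size st).+1 (ne o1 st) o1 st s p a =
    ls * (K0 + H * \sum_s bs s * Y s - cb C bs a).
  rewrite /uu -/ls -/bs.
  under eq_bigr => s _ do rewrite hD.
  rewrite (eq_bigr (fun s => ls * (K0 * bs s + H * (bs s * Y s) - C s a * bs s)));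
    last by move=> s _; ring.
  rewrite -mulr_sumr sumrB big_split /= -!mulr_sumr.
  by case: hbs => _ ->; rewrite mulr1.
rewrite hC'.
have hB : J p + v p bk = cb C bk a + \sum_o Pobs eta (ker p) bk a o * w o.
  by case: (hbell p) => _ _ hb; have [-> _] := hb _ hbk.
have hTV' : \sum_o Pobs eta (ker pstar) bs a o * w o - \sum_o Pobs eta (ker p) bk a o * w o <=
    H * \sum_s bs s * Y s + H * Z.
  apply: (TV heta).
  - by move=> o; apply: v_bnd; apply: tau_simplex.
  - by case: hbs.
  - by move=> s; exact: hker.
have hX : H * e - v p bk <= K0 + H * \sum_s bs s * Y s - cb C bs a -
    \sum_o Pobs eta (ker pstar) bs a o * w o.
  rewrite /K0; lra.
apply: le_trans (ler_wpM2l ls0 hX) _.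
rewrite mulrDr; apply: lerD; [exact: lexx|exact: hF].
Qed.

Lemma main_ind n : forall o1 st pc,
  (if ne o1 st then 0 else - (lk pstar o1 st * v pc (bel pc o1 st))) <= FF n o1 st pc.
Proof.
elim: n => [|n IH] o1 st pc.
  have -> : FF 0 o1 st pc = 0 by rewrite /FF big1 // => s _ /=; rewrite mulr0.
  case: (ne o1 st) => //; rewrite oppr_le0; apply: mulr_ge0.
    by case/andP: (lk_bnd pstar o1 st).
  by case/andP: (v_bnd pc (bel_simplex pc o1 st)).
rewrite /FF; under eq_bigr => s _ do rewrite ValS.
case hne: (ne o1 st).
  rewrite -pe_sum; first last.
  - by move=> s; apply: gd_stp; [exact: good_D|move=> *; apply: gd_Val; exact: good_D].
  - exact: gd_lk.
  apply: pe_ge0.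
    by move=> p; case/andP: (lk_bnd p o1 st).
  move=> p; apply: (le_trans _ (@KI n o1 st p (IH o1))); rewrite hne mulr1.
  apply: mulr_ge0; first by case/andP: (lk_bnd pstar o1 st).
  by rewrite subr_ge0; case/andP: (v_bnd p (bel_simplex p o1 st)).
apply: (le_trans _ (@KI n o1 st pc (IH o1))); rewrite hne mulr0 sub0r mulrN //.
Qed.


Lemma Exp_D T : 0 <= EE T D.
Proof.
have -> : EE T D = \sum_o FF T o [::] pstar.
  rewrite /Exp /FF.
  have -> : \sum_s h0 pstar s * \sum_o eta s o * VV D T o [::] s pstar =
      \sum_s \sum_o h0 pstar s * eta s o * VV D T o [::] s pstar.
    by apply: eq_bigr => s _; rewrite mulr_sumr; apply: eq_bigr => o _; ring.
  rewrite exchange_big /=; apply: eq_bigr => o _; apply: eq_bigr => s _.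
  by rewrite /uu u_init //; ring.
apply: sumr_ge0 => o _; exact: (main_ind T o [::] pstar).
Qed.

Lemma final T :
  EE T (g_regret C J pstar)
  <= H * EE T g_episode
     + EE T (g_R1 J pstar)
     + EE T (g_R2 eta ker h0 H pstar)
     + EE T (g_R3 C eta ker h0 pstar).
Proof.
have := Exp_D T; rewrite /D.
rewrite !Exp_lin //;
  repeat (first [exact: good_regret|exact: good_episode|exact: good_R1|exact: good_R2
                |exact: good_R3|apply: good_lin]).
lra.
Qed.

End Main.


Unset Implicit Arguments.

Theorem lemma2 (R : realType) (S A Ob : finType)
  (d : measure_display) (Th : measurableType d) (prior : probability Th R)
  (C : S -> A -> R) (eta : S -> Ob -> R)
  (ker : Th -> S -> A -> S -> R) (h0 : Th -> S -> R)
  (H : R) (J : Th -> R) (v : Th -> (S -> R) -> R) (pistar : Th -> (S -> R) -> A)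
  (ep : Ob -> seq (A * Ob) -> bool) (T : nat) (pstar : Th) :
  (forall s a, 0 <= C s a <= 1) ->
  (forall s, simplex (eta s)) ->
  (forall p s a, simplex (ker p s a)) ->
  (forall p, simplex (h0 p)) ->
  (forall p, bellman_sol H C eta (ker p) (J p) (v p) (pistar p)) ->
  (forall s a s', measurable_fun setT (fun p => ker p s a s')) ->
  (forall s, measurable_fun setT (fun p => h0 p s)) ->
  measurable_fun setT J ->
  (forall b : Th -> S -> R, (forall s, measurable_fun setT (fun p => b p s)) ->
     forall a, measurable [set p | pistar p (b p) = a]) ->
  let E := Exp prior eta ker h0 pistar ep pstar T in
  E (g_regret C J pstar)
  <= H * E g_episode
     + E (g_R1 J pstar)
     + E (g_R2 eta ker h0 H pstar)
     + E (g_R3 C eta ker h0 pstar).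
Proof.
move=> hC heta hker hh0 hbell mker mh0 mJ mpi.
have := @final R S A Ob d Th prior C eta ker h0 H J v pistar ep pstar hC heta hker hh0 hbell mker mh0 mJ mpi T.
by [].
Qed.
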